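(* Consider the integer linear program in variables $\mathbf{c}=(c_1,\ldots,c_d)\in\mathbb{Z}^d$: $$\text{maximize } c_1+\cdots+c_d-1 \quad\text{subject to}\quad 0\le c_i\le nr\ (i\in[d]),\qquad \sum_{i\in S}c_i\le\sum_{\lambda\cap S\neq\emptyset}|N_\lambda|\ \ (S\subseteq[d]).$$ Let $\mathbf{c}^{(0)}=0\in\mathbb{Z}^d$. For $t=1,\ldots,r$, let $\mathbf{c}^{(t)}\in\mathbb{Z}^d$ satisfy the following, where $\mathbf{c}^{(t)}$ is always chosen to satisfy all constraints $\sum_{i\in S}c^{(t)}_i\le\sum_{\lambda\cap S\ne\emptyset}|N_\lambda|$: - $c_i^{(t-1)}\le c_i^{(t)}\le c_i^{(t-1)}+n$ for all $i\in[d]$; - whenever $c_i^{(t)}<c_i^{(t-1)}+n$, there exists $S\subseteq[d]$ with $i\in S$ and $\sum_{j\in S}c_j^{(t)}=\sum_{\lambda\cap S\neq\emptyset}|N_\lambda|$. Then $\mathbf{c}^{(r)}$ is an optimal solution of the integer linear program.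
   Context: Let $[d]=\{1,\ldots,d\}$, and let $n,r,d$ be positive integers. For a partition $\lambda$ of $d$ with at most $n$ parts, $N_\lambda$ is the set of index vectors $(i_1,\ldots,i_n)\in\mathbb{Z}_{\ge0}^n$ whose multiset of nonzero entries equals $\lambda$. The sum $\sum_{\lambda\cap S\neq\emptyset}$ ranges over the partitions $\lambda$ of $d$ of length at most $n$ having at least one part in $S$. *)

(* Defs.v *)
From HB Require Import structures.
From mathcomp Require Import all_boot all_order all_algebra.
Set Implicit Arguments. Unset Strict Implicit. Unset Printing Implicit Defensive.
Import Order.TTheory GRing.Theory Num.Theory.

(* Conventions: [d] = {1,...,d} is represented by 'I_d, the ordinal i standing
   for the integer i+1.  A partition of d with at most n parts is represented
   (standardly) as a nonincreasing n-tuple of nonnegative integers summing to d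
   (padded with zeros); its parts are its nonzero entries.  Every entry is
   <= d, hence the tuple lives in n.-tuple 'I_d.+1. *)

Definition is_partition (n d : nat) (la : n.-tuple 'I_d.+1) : bool :=
  sorted (fun a b : nat => b <= a) [seq val x | x <- la] &&
  (\sum_(x <- la) val x == d).

Definition parts (n d : nat) (la : n.-tuple 'I_d.+1) : seq nat :=
  [seq k <- [seq val x | x <- la] | k != 0].

Definition nz_entries (n d : nat) (v : {ffun 'I_n -> 'I_d.+1}) : seq nat :=
  [seq k <- [seq val (v i) | i <- enum 'I_n] | k != 0].

(* N_lambda : index vectors (i_1,...,i_n) in Z_{>=0}^n whose multiset of nonzero
   entries equals lambda.  Such vectors have all entries <= d (they are parts of
   lambda or 0), so they are all represented in {ffun 'I_n -> 'I_d.+1}. *)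
Definition N_ (n d : nat) (la : n.-tuple 'I_d.+1) : {set {ffun 'I_n -> 'I_d.+1}} :=
  [set v | perm_eq (nz_entries v) (parts la)].

(* lambda \cap S <> empty, for S a subset of [d] (ordinal i <-> integer i+1) *)
Definition meets (n d : nat) (la : n.-tuple 'I_d.+1) (S : {set 'I_d}) : bool :=
  has (fun k => [exists i in S, k == (val i).+1]) (parts la).

Definition rhs (n d : nat) (S : {set 'I_d}) : int :=
  (\sum_(la : n.-tuple 'I_d.+1 | is_partition la && meets la S) #|N_ la|)%:Z.

Local Open Scope ring_scope.

Definition subset_constraints (n d : nat) (c : 'I_d -> int) : Prop :=
  forall S : {set 'I_d}, \sum_(i in S) c i <= rhs n S.

Definition ilp_feasible (n r d : nat) (c : 'I_d -> int) : Prop :=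
  (forall i, 0 <= c i <= (n * r)%:Z) /\ subset_constraints n c.

Definition ilp_objective (d : nat) (c : 'I_d -> int) : int :=
  \sum_(i < d) c i - 1.

Definition ilp_optimal (n r d : nat) (c : 'I_d -> int) : Prop :=
  ilp_feasible n r c /\
  forall c' : 'I_d -> int, ilp_feasible n r c' -> ilp_objective c' <= ilp_objective c.

(* Main.v *)
Require Import Defs.
From mathcomp Require Import all_boot all_order all_algebra.
From mathcomp Require Import zify ring lra.
Import Order.TTheory GRing.Theory Num.Theory.
Local Open Scope ring_scope.

Lemma meets_U n d (la : n.-tuple 'I_d.+1) (A B : {set 'I_d}) :
  meets la (A :|: B) = meets la A || meets la B.
Proof.
rewrite /meets -has_predU; apply: eq_has => k /=.
apply/idP/idP.
- case/existsP=> i /andP[]; rewrite in_setU => /orP[hA|hB] hk.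
  + by apply/orP; left; apply/existsP; exists i; rewrite hA.
  + by apply/orP; right; apply/existsP; exists i; rewrite hB.
- case/orP=> /existsP[i /andP[hi hk]]; apply/existsP; exists i;
  by rewrite in_setU hi ?orbT.
Qed.

Lemma meets_sub n d (la : n.-tuple 'I_d.+1) (A B : {set 'I_d}) :
  A \subset B -> meets la A -> meets la B.
Proof.
move=> sAB; apply: sub_has => k /existsP[i /andP[hi hk]].
by apply/existsP; exists i; rewrite hk (subsetP sAB).
Qed.

Lemma meets0 n d (la : n.-tuple 'I_d.+1) : meets la set0 = false.
Proof.
apply/negbTE/hasPn => k _; apply/negP => /existsP[i /andP[]].
by rewrite in_set0.
Qed.

Lemma rhs0 n d : rhs n (set0 : {set 'I_d}) = 0.
Proof.
rewrite /rhs big1 // => la /andP[_]; by rewrite meets0.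
Qed.

Lemma rhs_sub n d (A B : {set 'I_d}) :
  rhs n (A :|: B) + rhs n (A :&: B) <= rhs n A + rhs n B.
Proof.
rewrite /rhs -!PoszD lez_nat.
move: (@is_partition n d) => P.
rewrite !big_mkcondr.
rewrite -!big_split; apply: leq_sum => la _.
rewrite meets_U.
have hI := @meets_sub _ _ la _ _ (subsetIl A B).
have hI2 := @meets_sub _ _ la _ _ (subsetIr A B).
case: (meets la A) hI => hI; case: (meets la B) hI2 => hI2;
 case: (meets la (A :&: B)) hI hI2 => hI hI2 /=; try lia.
all: try by move: (hI isT).
all: by move: (hI2 isT).
Qed.

Lemma sum_UI d (c : 'I_d -> int) (A B : {set 'I_d}) :
  \sum_(i in A :|: B) c i + \sum_(i in A :&: B) c i =
  \sum_(i in A) c i + \sum_(i in B) c i.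
Proof.
rewrite [\sum_(i in A :|: B) _]big_mkcond [\sum_(i in A :&: B) _]big_mkcond.
rewrite [\sum_(i in A) _]big_mkcond [\sum_(i in B) _]big_mkcond.
rewrite -!big_split; apply: eq_bigr => i _ /=.
rewrite in_setU in_setI; case: (i \in A); case: (i \in B) => /=; ring.
Qed.

Theorem theorem5p4 (n r d : nat) (hn : (0 < n)%N) (hr : (0 < r)%N) (hd : (0 < d)%N)
  (cs : nat -> 'I_d -> int)
  (h0 : forall i, cs 0%N i = 0)
  (hfeas : forall t, (1 <= t <= r)%N -> subset_constraints n (cs t))
  (hstep : forall t, (1 <= t <= r)%N -> forall i,
      cs t.-1 i <= cs t i <= cs t.-1 i + n%:Z)
  (htight : forall t, (1 <= t <= r)%N -> forall i,
      cs t i < cs t.-1 i + n%:Z ->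
      exists S : {set 'I_d}, i \in S /\ \sum_(j in S) cs t j = rhs n S) :
  ilp_optimal n r (cs r).
Proof.
have step t j : (t < r)%N -> cs t j <= cs t.+1 j <= cs t j + n%:Z.
  by move=> ht; have := hstep t.+1 ltac:(lia) j.
have bnd t j : (t <= r)%N -> 0 <= cs t j /\ cs t j <= (t * n)%N%:Z.
  elim: t => [|t IH] ht; first by rewrite h0 mul0n.
  have [IH1 IH2] := IH ltac:(lia).
  have /andP[s1 s2] := step t j ltac:(lia).
  split; first by lia.
  rewrite mulSn PoszD; lia.
have mono t t' j : (t <= t')%N -> (t' <= r)%N -> cs t j <= cs t' j.
  move=> htt'; elim: t' htt' => [|t' IH] htt' ht'.
    by have -> : t = 0%N by lia.
  case: (ltnP t t'.+1) => [h|h]; last by have -> : t = t'.+1 by lia.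
  have /andP[s1 _] := step t' j ltac:(lia).
  have := IH ltac:(lia) ltac:(lia); lia.
have sat j : cs r j = (n * r)%N%:Z \/
    exists t, (1 <= t <= r)%N /\ cs t j < cs t.-1 j + n%:Z.
  suff : forall t, (t <= r)%N -> cs t j = (t * n)%N%:Z \/
    exists t', (1 <= t' <= r)%N /\ cs t' j < cs t'.-1 j + n%:Z.
    by move=> /(_ r (leqnn r)); rewrite mulnC.
  elim=> [|t IH] ht; first by left; rewrite h0.
  case: (IH ltac:(lia)) => [e|]; last by right.
  have /andP[s1 s2] := step t j ltac:(lia).
  case: (ltrP (cs t.+1 j) (cs t j + n%:Z)) => h.
    by right; exists t.+1; split; [lia|].
  left; rewrite mulSn PoszD; lia.
pose c := cs r.
have feasr : subset_constraints n c by apply: hfeas; lia.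
pose tight (S : {set 'I_d}) := \sum_(j in S) c j == rhs n S.
have tightU A B : tight A -> tight B -> tight (A :|: B).
  rewrite /tight => /eqP hA /eqP hB.
  have e := @sum_UI d c A B.
  have s := @rhs_sub n d A B.
  have f1 := feasr (A :|: B); have f2 := feasr (A :&: B).
  apply/eqP; lia.
pose T := \big[@setU _/set0]_(S : {set 'I_d} | tight S) S.
have tT : tight T.
  apply: (big_ind tight) => //; by rewrite /tight big_set0 rhs0.
have outT j : j \notin T -> c j = (n * r)%N%:Z.
  move=> hj; rewrite /c; case: (sat j) => [//|[t [ht hlt]]].
  have [S [hS eS]] := htight t ht j hlt.
  have tS : tight S.
    rewrite /tight eq_le feasr /=; rewrite -eS.
    apply: ler_sum => i _; apply: mono; lia.
  exfalso; move/negP: hj; apply.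
  rewrite /T (bigD1 S) //= in_setU hS //.
split.
  split => //; move=> i; have [b1 b2] := bnd r i (leqnn r).
  by rewrite b1 /= mulnC.
move=> c' [hc'1 hc'2]; rewrite /ilp_objective lerD2r.
rewrite (bigID (fun i => i \in T)) [X in _ <= X](bigID (fun i => i \in T)) /=.
apply: lerD; first by apply: (le_trans (hc'2 T)); rewrite -(eqP tT).
apply: ler_sum => i hi; have e := outT i hi; rewrite /c in e; rewrite e; by have /andP[_ ->] := hc'1 i.
Qed.
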